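(* Let $X=\{(u,v,w)\in\mathbb{R}^3:u\le0,\ v\le0,\ w\le 0,\ uv+w-1\le0\}$ with the Euclidean topology $\tau$ and the coordinatewise partial order $\preceq$. Then $(X,\tau,\preceq)$ is a locally compact, order-connected Hausdorff topological $\wedge$-semilattice, and the canonical map $x\mapsto x^\downarrow$ satisfies: (i) it topologically order-embeds $(X,\tau,\preceq)$ in $(C(X),\tau_F,\subseteq)$; (ii) as a map from $(X,\tau)$ to $(C^\downarrow(X),\tau_H)$ it is discontinuous at every point of $X$; (iii) as a map from $(X,\tau)$ to $(C^\downarrow(X),\tau_V)$ it is discontinuous at every point of $X\setminus\{(0,0,0)\}$ and continuous at $(0,0,0)$.
   Context: A partially ordered topological space is a topological space with a partial order whose graph is closed in the product; a topological $\wedge$-semilattice is one in which every pair has an infimum in $X$ and $\wedge:X\times X\to X$ is continuous. $x^\downarrow=\{u\in X:u\preceq x\}$, $x^\uparrow=\{u\in X:x\preceq u\}$ (inside $X$); order-connected means $x^\uparrow\cap y^\downarrow$ is connected whenever $x\preceq y$. $C(X)$ = closed subsets of $X$, $C^\downarrow(X)=\{x^\downarrow:x\in X\}$. Fell topology $\tau_F$: generated by $\{A:A\cap O\neq\emptyset\}$ ($O$ open) and $\{A:A\cap D=\emptyset\}$ ($D$ compact). Vietoris topology $\tau_V$: generated by $\{A:A\cap O\neq\emptyset\}$ ($O$ open) and $\{A:A\cap E=\emptyset\}$ ($E$ closed). $\tau_H$ is the topology induced by the (extended-valued) Hausdorff distance $H(A,B)=\max\{\sup_{a\in A}\inf_{b\in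 B}d(a,b),\ \sup_{b\in B}\inf_{a\in A}d(a,b)\}$, $d$ Euclidean metric. ''Topologically order-embeds'': $x\preceq y\iff x^\downarrow\subseteq y^\downarrow$ and $x\mapsto x^\downarrow$ is a homeomorphism onto $C^\downarrow(X)$ with the relative Fell topology. *)

(* Defs.v *)
(* Points of R^3 are nested pairs ((u,v),w) in
   R * R * R with the product (= Euclidean) topology. *)
From HB Require Import structures.
From mathcomp Require Import all_boot all_order all_algebra.
From mathcomp Require Import all_classical all_reals all_analysis.
Set Implicit Arguments. Unset Strict Implicit. Unset Printing Implicit Defensive.
Import Order.TTheory GRing.Theory Num.Theory.
Import numFieldNormedType.Exports.
Local Open Scope classical_set_scope.
Local Open Scope ring_scope.

Notation pt R := (R * R * R)%type (only parsing).

Definition coord_le {R : realType} (p q : pt R) : Prop :=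
  p.1.1 <= q.1.1 /\ p.1.2 <= q.1.2 /\ p.2 <= q.2.

Definition Xex (R : realType) : set (pt R) :=
  [set p | p.1.1 <= 0 /\ p.1.2 <= 0 /\ p.2 <= 0 /\ p.1.1 * p.1.2 + p.2 - 1 <= 0].

Definition euclid_dist {R : realType} (p q : pt R) : R :=
  Num.sqrt ((p.1.1 - q.1.1) ^+ 2 + (p.1.2 - q.1.2) ^+ 2 + (p.2 - q.2) ^+ 2).

Definition open_in {T : topologicalType} (X U : set T) : Prop :=
  exists O, open O /\ U = X `&` O.
Definition closed_in {T : topologicalType} (X A : set T) : Prop :=
  exists C, closed C /\ A = X `&` C.

Definition hausdorff_in {T : topologicalType} (X : set T) : Prop :=
  forall p q, X p -> X q -> p <> q ->
    exists U V, open_in X U /\ open_in X V /\ U p /\ V q /\ U `&` V = set0.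

Definition locally_compact_in {T : topologicalType} (X : set T) : Prop :=
  forall x, X x -> exists K, K `<=` X /\ compact K /\
    exists U, open_in X U /\ U x /\ U `<=` K.

Definition partial_order_on {T : Type} (X : set T) (le : T -> T -> Prop) : Prop :=
  (forall x, X x -> le x x) /\
  (forall x y, X x -> X y -> le x y -> le y x -> x = y) /\
  (forall x y z, X x -> X y -> X z -> le x y -> le y z -> le x z).

Definition downset {T : Type} (X : set T) (le : T -> T -> Prop) (x : T) : set T :=
  [set u | X u /\ le u x].
Definition upset {T : Type} (X : set T) (le : T -> T -> Prop) (x : T) : set T :=
  [set u | X u /\ le x u].

Definition po_top_space {T : topologicalType} (X : set T) (le : T -> T -> Prop) : Prop :=
  partial_order_on X le /\
  closed_in (X `*` X) [set p | X p.1 /\ X p.2 /\ le p.1 p.2].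

Definition order_connected {T : topologicalType} (X : set T) (le : T -> T -> Prop) : Prop :=
  forall x y, X x -> X y -> le x y -> connected (upset X le x `&` downset X le y).

Definition is_inf_in {T : Type} (X : set T) (le : T -> T -> Prop) (x y z : T) : Prop :=
  X z /\ le z x /\ le z y /\ forall w, X w -> le w x -> le w y -> le w z.

Definition top_meet_semilattice {T : topologicalType} (X : set T)
    (le : T -> T -> Prop) : Prop :=
  po_top_space X le /\
  exists m : T -> T -> T,
    (forall x y, X x -> X y -> is_inf_in X le x y (m x y)) /\
    {within X `*` X, continuous (fun p => m p.1 p.2)}.

Definition CX {T : topologicalType} (X : set T) : set (set T) :=
  [set A | A `<=` X /\ closed_in X A].
Definition Cdown {T : Type} (X : set T) (le : T -> T -> Prop) : set (set T) :=
  [set A | exists x, X x /\ A = downset X le x].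

Definition hit {T : topologicalType} (X O : set T) : set (set T) :=
  [set A | CX X A /\ A `&` O !=set0].
Definition miss {T : topologicalType} (X D : set T) : set (set T) :=
  [set A | CX X A /\ A `&` D = set0].

(* open sets of the topology on the universe U0 generated by the subbase S:
   every member of U has a basic neighbourhood (finite intersection of
   subbasic sets, intersected with U0) contained in U *)
Definition generated_open {T : Type} (U0 : set T) (S : set (set T)) (U : set T) : Prop :=
  U `<=` U0 /\
  forall A, U A -> exists (n : nat) (W : nat -> set T),
    (forall i, (i < n)%N -> S (W i) /\ W i A) /\
    (forall B, U0 B -> (forall i, (i < n)%N -> W i B) -> U B).

Definition fell_subbase {T : topologicalType} (X : set T) : set (set (set T)) :=
  [set W | (exists O, open_in X O /\ W = hit X O) \/
           (exists D, D `<=` X /\ compact D /\ W = miss X D)].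
Definition vietoris_subbase {T : topologicalType} (X : set T) : set (set (set T)) :=
  [set W | (exists O, open_in X O /\ W = hit X O) \/
           (exists E, E `<=` X /\ closed_in X E /\ W = miss X E)].

Definition fell_open {T : topologicalType} (X : set T) : set (set T) -> Prop :=
  generated_open (CX X) (fell_subbase X).
Definition vietoris_open {T : topologicalType} (X : set T) : set (set T) -> Prop :=
  generated_open (CX X) (vietoris_subbase X).

Definition relative_open {T : Type} (U1 : set T) (openP : set T -> Prop) (U : set T) : Prop :=
  exists W, openP W /\ U = U1 `&` W.

Definition hausdorff_dist {R : realType} (A B : set (pt R)) : \bar R :=
  Order.max
    (ereal_sup [set ereal_inf [set (euclid_dist a b)%:E | b in B] | a in A])
    (ereal_sup [set ereal_inf [set (euclid_dist a b)%:E | a in A] | b in B]).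

Definition hausdorff_open {R : realType} (U1 : set (set (pt R))) (U : set (set (pt R))) : Prop :=
  U `<=` U1 /\
  forall A, U A -> exists e : R, 0 < e /\
    forall B, U1 B -> (hausdorff_dist A B < e%:E)%E -> U B.

Definition cont_at_into {T : topologicalType} {S : Type} (X : set T)
    (openS : set S -> Prop) (f : T -> S) (x : T) : Prop :=
  forall U, openS U -> U (f x) ->
    exists O, open_in X O /\ O x /\ forall y, O y -> U (f y).

Definition homeomorphism_onto {T : topologicalType} {S : Type} (X : set T)
    (S1 : set S) (openS : set S -> Prop) (f : T -> S) : Prop :=
  (forall x, X x -> S1 (f x)) /\
  (forall s, S1 s -> exists x, X x /\ f x = s) /\
  (forall x y, X x -> X y -> f x = f y -> x = y) /\
  (forall x, X x -> cont_at_into X openS f x) /\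
  (forall U, open_in X U -> openS (f @` U)).

Definition top_order_embeds {T : topologicalType} (X : set T) (le : T -> T -> Prop) : Prop :=
  (forall x, X x -> CX X (downset X le x)) /\
  (forall x y, X x -> X y -> (le x y <-> downset X le x `<=` downset X le y)) /\
  homeomorphism_onto X (Cdown X le) (relative_open (Cdown X le) (fell_open X)) (downset X le).

(* Main.v *)
Require Import Defs.
From HB Require Import structures.
From mathcomp Require Import all_boot all_order all_algebra.
From mathcomp Require Import all_classical all_reals all_analysis.
From mathcomp Require Import ring lra.
Import Order.TTheory GRing.Theory Num.Theory.
Import numFieldNormedType.Exports.
Local Open Scope classical_set_scope.
Local Open Scope ring_scope.

Section A.
Variable R : realType.
Implicit Types p q : pt R.

Definition near3 (d : R) p q :=
  (p.1.1 - d < q.1.1 /\ q.1.1 < p.1.1 + d) /\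
  (p.1.2 - d < q.1.2 /\ q.1.2 < p.1.2 + d) /\
  (p.2 - d < q.2 /\ q.2 < p.2 + d).

Lemma near3_mono d d' p q : d <= d' -> near3 d p q -> near3 d' p q.
Proof. rewrite /near3 => h; lra. Qed.

Lemma near3_refl d p : 0 < d -> near3 d p p.
Proof. rewrite /near3 => h; lra. Qed.

Lemma ball_R (a e b : R) : ball a e b <-> a - e < b /\ b < a + e.
Proof. rewrite -ball_normE /= ltr_distlC; split => [/andP[]|[-> ->]] //. Qed.

Lemma open_close (O : set (pt R)) p : open O -> O p ->
  exists2 d, 0 < d & forall q, near3 d p q -> O q.
Proof.
move=> oO Op.
have : nbhs p O by apply: open_nbhs_nbhs; split.
move=> /nbhs_ballP [e e0 H]; exists e => // q [h1 [h2 h3]].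
by apply: H; split; [split|] => /=; apply/ball_R.
Qed.

Lemma close_open (O : set (pt R)) :
  (forall p, O p -> exists2 d, 0 < d & forall q, near3 d p q -> O q) -> open O.
Proof.
move=> H; rewrite openE => p Op.
have [d d0 Hd] := H p Op.
apply/nbhs_ballP; exists d => // q [[h1 h2] h3]; apply: Hd.
by move: h1 h2 h3 => /ball_R h1 /ball_R h2 /ball_R h3.
Qed.

Lemma box_open d p : open [set q | near3 d p q].
Proof.
apply: close_open => q hq.
pose m := Num.min (Num.min (p.1.1 + d - q.1.1) (q.1.1 - (p.1.1 - d)))
  (Num.min (Num.min (p.1.2 + d - q.1.2) (q.1.2 - (p.1.2 - d)))
           (Num.min (p.2 + d - q.2) (q.2 - (p.2 - d)))).
move: hq => /= [[a1 a2] [[a3 a4] [a5 a6]]].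
have m0 : 0 < m.
  have h1 : 0 < p.1.1 + d - q.1.1 by lra.
  have h2 : 0 < q.1.1 - (p.1.1 - d) by lra.
  have h3 : 0 < p.1.2 + d - q.1.2 by lra.
  have h4 : 0 < q.1.2 - (p.1.2 - d) by lra.
  have h5 : 0 < p.2 + d - q.2 by lra.
  have h6 : 0 < q.2 - (p.2 - d) by lra.
  by rewrite !lt_min h1 h2 h3 h4 h5 h6.
have m1 : m <= p.1.1 + d - q.1.1 by rewrite !ge_min lexx.
have m2 : m <= q.1.1 - (p.1.1 - d) by rewrite !ge_min lexx !orbT.
have m3 : m <= p.1.2 + d - q.1.2 by rewrite !ge_min lexx !orbT.
have m4 : m <= q.1.2 - (p.1.2 - d) by rewrite !ge_min lexx !orbT.
have m5 : m <= p.2 + d - q.2 by rewrite !ge_min lexx !orbT.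
have m6 : m <= q.2 - (p.2 - d) by rewrite !ge_min lexx !orbT.
exists m => // r; rewrite /near3 /=; lra.
Qed.

Lemma openin_close (X O : set (pt R)) p : open_in X O -> O p ->
  exists2 d, 0 < d & forall q, X q -> near3 d p q -> O q.
Proof.
move=> [W [oW ->]] [Xp Wp].
have [d d0 H] := @open_close W p oW Wp.
by exists d => // q Xq cq; split => //; apply: H.
Qed.

Lemma openin_box (X : set (pt R)) d p : open_in X (X `&` [set q | near3 d p q]).
Proof. by exists [set q | near3 d p q]; split => //; apply: box_open. Qed.

Lemma closed_pre (T : topologicalType) (f : T -> R) c :
  continuous f -> closed [set x | f x <= c].
Proof.
move=> cf.
have -> : [set x | f x <= c] = ~` (f @^-1` [set y | c < y]).
  by apply/seteqP; split => x /= h; [apply/negP; rewrite -leNgt| rewrite leNgt; apply/negP].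
by apply: open_closedC; move/continuousP: cf; apply; apply: open_gt.
Qed.

Lemma closed_pre_ge (T : topologicalType) (f : T -> R) c :
  continuous f -> closed [set x | c <= f x].
Proof.
move=> cf.
have -> : [set x | c <= f x] = ~` (f @^-1` [set y | y < c]).
  by apply/seteqP; split => x /= h; [apply/negP; rewrite -leNgt| rewrite leNgt; apply/negP].
by apply: open_closedC; move/continuousP: cf; apply; apply: open_lt.
Qed.

Lemma open_pre_lt (T : topologicalType) (f : T -> R) c :
  continuous f -> open [set x | f x < c].
Proof. by move/continuousP => cf; apply: (cf [set y | y < c]); apply: open_lt. Qed.

Lemma open_pre_gt (T : topologicalType) (f : T -> R) c :
  continuous f -> open [set x | c < f x].
Proof. by move/continuousP => cf; apply: (cf [set y | c < y]); apply: open_gt. Qed.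

Lemma pair_cont (T A B : topologicalType) (f : T -> A) (g : T -> B) :
  continuous f -> continuous g -> continuous (fun x => (f x, g x)).
Proof. by move=> cf cg x; apply: cvg_pair; [apply: cf|apply: cg]. Qed.
Lemma min_cont (T : topologicalType) (f g : T -> R) :
  continuous f -> continuous g -> continuous (fun x => Num.min (f x) (g x)).
Proof. move=> cf cg x; have := @continuous_min R T f g x (cf x) (cg x). by []. Qed.
Lemma mul_cont (T : topologicalType) (f g : T -> R) :
  continuous f -> continuous g -> continuous (fun x => f x * g x).
Proof. move=> cf cg x; exact: (continuousM (cf x) (cg x)). Qed.
Lemma add_cont (T : topologicalType) (f g : T -> R) :
  continuous f -> continuous g -> continuous (fun x => f x + g x).
Proof. move=> cf cg x; exact: (continuousD (cf x) (cg x)). Qed.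
Lemma opp_cont (T : topologicalType) (f : T -> R) :
  continuous f -> continuous (fun x => - f x).
Proof. move=> cf x; exact: (continuousN (cf x)). Qed.
Lemma cst_cont (T : topologicalType) (c : R) : continuous (fun _ : T => c).
Proof. exact: cst_continuous. Qed.
Lemma sub_cont (T : topologicalType) (f g : T -> R) :
  continuous f -> continuous g -> continuous (fun x => f x - g x).
Proof. by move=> cf cg; apply: add_cont => //; apply: opp_cont. Qed.
Lemma id_cont : continuous (fun x : R => x).
Proof. by move=> x; apply: cvg_id. Qed.

Lemma p11_cont : continuous (fun p : pt R => p.1.1).
Proof. move=> x. have -> : (fun p : pt R => p.1.1) = fst \o fst by [].
apply: continuous_comp; first by case: x => a b; exact: cvg_fst.
by case: x => [[a b] c]; exact: cvg_fst.
Qed.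
Lemma p12_cont : continuous (fun p : pt R => p.1.2).
Proof. move=> x. have -> : (fun p : pt R => p.1.2) = snd \o fst by [].
apply: continuous_comp; first by case: x => a b; exact: cvg_fst.
by case: x => [[a b] c]; exact: cvg_snd.
Qed.
Lemma p2_cont : continuous (fun p : pt R => p.2).
Proof. by move=> [a b]; exact: cvg_snd. Qed.

Lemma c111 : continuous (fun p : pt R * pt R => p.1.1.1).
Proof. move=> x. have -> : (fun p : pt R * pt R => p.1.1.1) = fst \o fst \o fst by [].
apply: continuous_comp; first by case: x => a b; exact: cvg_fst.
apply: continuous_comp; first by case: x => [[a b] c]; exact: cvg_fst.
by case: x => [[[a b] c] d]; exact: cvg_fst.
Qed.
Lemma c112 : continuous (fun p : pt R * pt R => p.1.1.2).
Proof. move=> x. have -> : (fun p : pt R * pt R => p.1.1.2) = snd \o fst \o fst by [].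
apply: continuous_comp; first by case: x => a b; exact: cvg_fst.
apply: continuous_comp; first by case: x => [[a b] c]; exact: cvg_fst.
by case: x => [[[a b] c] d]; exact: cvg_snd.
Qed.
Lemma c12 : continuous (fun p : pt R * pt R => p.1.2).
Proof. move=> x. have -> : (fun p : pt R * pt R => p.1.2) = snd \o fst by [].
apply: continuous_comp; first by case: x => a b; exact: cvg_fst.
by case: x => [[a b] c]; exact: cvg_snd.
Qed.
Lemma c211 : continuous (fun p : pt R * pt R => p.2.1.1).
Proof. move=> x. have -> : (fun p : pt R * pt R => p.2.1.1) = fst \o fst \o snd by [].
apply: continuous_comp; first by case: x => a b; exact: cvg_snd.
apply: continuous_comp; first by case: x => a [b c]; exact: cvg_fst.
by case: x => a [[b c] d]; exact: cvg_fst.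
Qed.
Lemma c212 : continuous (fun p : pt R * pt R => p.2.1.2).
Proof. move=> x. have -> : (fun p : pt R * pt R => p.2.1.2) = snd \o fst \o snd by [].
apply: continuous_comp; first by case: x => a b; exact: cvg_snd.
apply: continuous_comp; first by case: x => a [b c]; exact: cvg_fst.
by case: x => a [[b c] d]; exact: cvg_snd.
Qed.
Lemma c22 : continuous (fun p : pt R * pt R => p.2.2).
Proof. move=> x. have -> : (fun p : pt R * pt R => p.2.2) = snd \o snd by [].
apply: continuous_comp; first by case: x => a b; exact: cvg_snd.
by case: x => a [b c]; exact: cvg_snd.
Qed.

Lemma Xclosed : closed (@Xex R).
Proof.
have -> : @Xex R = [set p | p.1.1 <= 0] `&` [set p | p.1.2 <= 0] `&`
   [set p | p.2 <= 0] `&` [set p | p.1.1 * p.1.2 + p.2 - 1 <= 0].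
  apply/seteqP; split => p /=; rewrite /Xex /=; tauto.
apply: closedI; [apply: closedI; [apply: closedI|]|];
  apply: closed_pre.
- exact: p11_cont.
- exact: p12_cont.
- exact: p2_cont.
apply: sub_cont; last exact: cst_cont.
apply: add_cont; last exact: p2_cont.
apply: mul_cont; [exact: p11_cont|exact: p12_cont].
Qed.

Lemma pt_eq p q : p.1.1 = q.1.1 -> p.1.2 = q.1.2 -> p.2 = q.2 -> p = q.
Proof. by case: p => [[a b] c]; case: q => [[a' b'] c'] /= -> -> ->. Qed.

Lemma fin_min (x : pt R) (Y : set (pt R)) (n : nat) (P : nat -> pt R -> Prop) :
  (forall i, (i < n)%N -> exists2 d, 0 < d & forall y, Y y -> near3 d x y -> P i y) ->
  exists2 d, 0 < d & forall y, Y y -> near3 d x y -> forall i, (i < n)%N -> P i y.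
Proof.
elim: n => [|n IH] H; first by exists 1 => // y _ _ i.
have [d d0 Hd] := IH (fun i hi => H i (ltnW hi)).
have [e e0 He] := H n (ltnSn n).
exists (Num.min d e); first by rewrite lt_min d0 e0.
move=> y Yy cy i; rewrite ltnS leq_eqVlt => /orP [/eqP ->|hi].
  by apply: He => //; apply: near3_mono cy; rewrite ge_min lexx orbT.
by apply: Hd => //; apply: near3_mono cy; rewrite ge_min lexx.
Qed.

End A.
Arguments near3 {R} d p q.


Section B.
Variable R : realType.
Implicit Types p q x y : pt R.
Local Notation X := (@Xex R).
Local Notation le := (@coord_le R).
Local Notation dn := (downset (@Xex R) (@coord_le R)).

Lemma dn_closed x : closed (dn x).
Proof.
have -> : dn x = X `&` ([set p | p.1.1 <= x.1.1] `&` [set p | p.1.2 <= x.1.2]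
   `&` [set p | p.2 <= x.2]).
  apply/seteqP; split => p /=; rewrite /downset /coord_le /=; tauto.
apply: closedI; first exact: Xclosed.
apply: closedI; [apply: closedI|]; apply: closed_pre.
exact: p11_cont. exact: p12_cont. exact: p2_cont.
Qed.

Lemma CX_dn x : CX X (dn x).
Proof.
split; first by move=> p [].
exists (dn x); split; first exact: dn_closed.
by apply/seteqP; split => p; [move=> h; split=> //; case: h|case].
Qed.

Lemma dn_self x : X x -> dn x x.
Proof. by move=> Xx; split => //; rewrite /coord_le; lra. Qed.

Lemma le_iff x y : X x -> X y -> (le x y <-> dn x `<=` dn y).
Proof.
move=> Xx Xy; split.
  by move=> [h1 [h2 h3]] p [Xp [l1 [l2 l3]]]; split => //; rewrite /coord_le; lra.
by move=> /(_ x (dn_self x Xx)) [].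
Qed.

Lemma dn_inj x y : X x -> X y -> dn x = dn y -> x = y.
Proof.
move=> Xx Xy e.
have [a1 [a2 a3]] : le x y by apply/(le_iff x y Xx Xy); rewrite e.
have [b1 [b2 b3]] : le y x by apply/(le_iff y x Xy Xx); rewrite e.
by apply: pt_eq; lra.
Qed.

Lemma hit_near x O : open_in X O -> dn x `&` O !=set0 ->
  exists2 d, 0 < d & forall y, X y -> near3 d x y -> dn y `&` O !=set0.
Proof.
move=> [W [oW ->]] [p [[Xp lepx] [_ Wp]]].
have [e e0 He] := @open_close R W p oW Wp.
case: Xp => p1 [p2 [p3 p4]]; case: lepx => l1 [l2 l3].
pose K := 2 - p.1.1 - p.1.2 + e.
have K0 : 2 + e <= K by rewrite /K; lra.
have K0' : (2 * K) != 0 by apply: lt0r_neq0; lra.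
pose d := e / (2 * K).
have hKd : K * d = e / 2.
  by rewrite /d; field; apply: lt0r_neq0; lra.
have d0 : 0 < d by rewrite /d divr_gt0 //; lra.
have de : d <= e / 4 by nra.
exists d => // y Xy cy.
case: cy => [[c1 c2] [[c3 c4] [c5 c6]]].
have Xp' : X ((p.1.1 - d, p.1.2 - d), p.2 - K * d).
  rewrite /Xex /=; split; first lra; split; first lra; split; first nra.
  have -> : (p.1.1 - d) * (p.1.2 - d) + (p.2 - K * d) - 1 =
    (p.1.1 * p.1.2 + p.2 - 1) + d * (d - 2 - e) by rewrite /K; ring.
  nra.
exists ((p.1.1 - d, p.1.2 - d), p.2 - K * d); split; split => //.
  rewrite /coord_le /=; lra.
apply: He; rewrite /near3 /=; lra.
Qed.

Lemma ev_inv (r : R) : 0 < r -> \forall n \near \oo, n.+1%:R^-1 < r.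
Proof.
move=> r0; have [k hk] := ltr_add_invr r0; rewrite add0r in hk.
exists k => // n /= hn; apply: le_lt_trans hk.
by rewrite lef_pV2 ?posrE ?ltr0Sn // ler_nat ltnS.
Qed.

Lemma clus_coord (qs : nat -> pt R) c (pi : pt R -> R) (b : R) :
  cluster (qs @ \oo) c ->
  (forall r p, near3 r c p -> pi c - r < pi p) ->
  (forall n, pi (qs n) <= b + n.+1%:R^-1) -> pi c <= b.
Proof.
move=> cl hpi hb; rewrite leNgt; apply/negP => hc.
pose r := (pi c - b) / 2.
have r0 : 0 < r by rewrite /r divr_gt0 // subr_gt0.
have hB : nbhs c [set p | near3 r c p].
  by apply: open_nbhs_nbhs; split; [apply: box_open| apply: near3_refl].
have hA : \forall n \near \oo, pi (qs n) <= b + r.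
  near=> n; apply: (le_trans (hb n)); rewrite lerD2l ltW //.
  by near: n; exact: ev_inv.
have [p [h1 h2]] := cl [set p | pi p <= b + r] _ hA hB.
have := hpi r p h2; move: h1 => /= h1 h3; rewrite /r in h1 h3; lra.
Unshelve. all: by end_near.
Qed.

Lemma miss_near x D : compact D -> D `<=` X -> dn x `&` D = set0 ->
  exists2 d, 0 < d & forall y, X y -> near3 d x y -> dn y `&` D = set0.
Proof.
move=> cD DX hx.
case: (pselect (exists2 d, 0 < d & forall y, X y -> near3 d x y -> dn y `&` D = set0)) => // H.
exfalso.
have H2 : forall n : nat, exists q, D q /\ le q ((x.1.1 + n.+1%:R^-1, x.1.2 + n.+1%:R^-1), x.2 + n.+1%:R^-1).
  move=> n.
  have : (0 : R) < n.+1%:R^-1 by rewrite invr_gt0 ltr0Sn.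
  move: (n.+1%:R^-1 : R) => t t0.
  case: (pselect (exists q, D q /\ le q ((x.1.1 + t, x.1.2 + t), x.2 + t))) => // H3.
  exfalso; apply: H; exists t => // y Xy cy.
  apply/seteqP; split => // q [[Xq lqy] Dq]; apply: H3; exists q; split => //.
  case: cy => [[c1 c2] [[c3 c4] [c5 c6]]]; case: lqy => [l1 [l2 l3]].
  rewrite /coord_le /=; lra.
have [qs Hqs] := choice H2.
have FD : \forall n \near \oo, D (qs n) by apply: nearW => n; exact: (Hqs n).1.
have [c [Dc cl]] := cD (qs @ \oo) _ FD.
have l1 : c.1.1 <= x.1.1.
  apply: (@clus_coord qs c (fun p => p.1.1)) => //.
    by move=> r p [[]].
  by move=> n; case: (Hqs n) => _ [].
have l2 : c.1.2 <= x.1.2.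
  apply: (@clus_coord qs c (fun p => p.1.2)) => //.
    by move=> r p [_ [[]]].
  by move=> n; case: (Hqs n) => _ [_ []].
have l3 : c.2 <= x.2.
  apply: (@clus_coord qs c (fun p => p.2)) => //.
    by move=> r p [_ [_ []]].
  by move=> n; case: (Hqs n) => _ [_ []].
suff : (dn x `&` D) c by rewrite hx.
by split => //; split; [apply: DX|].
Qed.

End B.


Section C.
Variable R : realType.
Implicit Types p q x y : pt R.
Local Notation X := (@Xex R).
Local Notation le := (@coord_le R).
Local Notation dn := (downset (@Xex R) (@coord_le R)).

Lemma cont_gen (Sb : set (set (set (pt R)))) x : X x ->
  (forall W, Sb W -> W (dn x) ->
     exists2 d, 0 < d & forall y, X y -> near3 d x y -> W (dn y)) ->
  cont_at_into X (relative_open (Cdown X le) (generated_open (CX X) Sb)) dn x.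
Proof.
move=> Xx H U [W [[WC gW] ->]] [Cx Wx].
have [n [Ws [HWs Hsub]]] := gW _ Wx.
have [d d0 Hd] := @fin_min R x X n (fun i y => Ws i (dn y))
  (fun i hi => H _ (HWs i hi).1 (HWs i hi).2).
exists (X `&` [set q | near3 d x q]); split; first exact: openin_box.
split; first by split => //; apply: near3_refl.
move=> y [Xy cy]; split; first by exists y.
by apply: Hsub; [apply: CX_dn | move=> i hi; apply: Hd].
Qed.

Lemma fell_cont x : X x ->
  cont_at_into X (relative_open (Cdown X le) (fell_open X)) dn x.
Proof.
move=> Xx; apply: cont_gen => // W [[V [oV ->]] | [D [DX [cD ->]]]] [_ h].
  have [d d0 Hd] := hit_near R x V oV h.
  by exists d => // y Xy cy; split; [apply: CX_dn | apply: Hd].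
have [d d0 Hd] := miss_near R x D cD DX h.
by exists d => // y Xy cy; split; [apply: CX_dn | apply: Hd].
Qed.

Lemma box_compact (K : set (pt R)) (a1 b1 a2 b2 a3 b3 : R) : closed K ->
  (forall q, K q -> (a1 <= q.1.1 /\ q.1.1 <= b1) /\ (a2 <= q.1.2 /\ q.1.2 <= b2)
     /\ (a3 <= q.2 /\ q.2 <= b3)) -> compact K.
Proof.
move=> cK hK.
have c1 := @segment_compact R a1 b1.
have c2 := @segment_compact R a2 b2.
have c3 := @segment_compact R a3 b3.
have c := compact_setX (compact_setX c1 c2) c3.
apply: (subclosed_compact cK c).
move=> q /hK [[h1 h2] [[h3 h4] [h5 h6]]].
by split; [split|]; rewrite /= in_itv /=; apply/andP; split.
Qed.

Definition Ob x (d : R) : set (pt R) := X `&`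
  [set q | x.1.1 - d < q.1.1 /\ x.1.2 - d < q.1.2 /\ x.2 - d < q.2].
Definition Db x (d : R) : set (pt R) := X `&`
  [set q | (x.1.1 - d <= q.1.1 /\ x.1.2 - d <= q.1.2 /\ x.2 - d <= q.2) /\
    (x.1.1 + d <= q.1.1 \/ x.1.2 + d <= q.1.2 \/ x.2 + d <= q.2)].

Lemma Ob_open x d : open_in X (Ob x d).
Proof.
exists [set q | x.1.1 - d < q.1.1 /\ x.1.2 - d < q.1.2 /\ x.2 - d < q.2]; split => //.
have -> : [set q : pt R | x.1.1 - d < q.1.1 /\ x.1.2 - d < q.1.2 /\ x.2 - d < q.2] =
  [set q | x.1.1 - d < q.1.1] `&` ([set q | x.1.2 - d < q.1.2] `&` [set q | x.2 - d < q.2]).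
  by apply/seteqP; split => q /=.
apply: openI; [|apply: openI]; apply: open_pre_gt.
exact: p11_cont. exact: p12_cont. exact: p2_cont.
Qed.

Lemma Db_compact x d : compact (Db x d).
Proof.
apply: (@box_compact _ (x.1.1 - d) 0 (x.1.2 - d) 0 (x.2 - d) 0).
  apply: closedI; first exact: Xclosed.
  have -> : [set q : pt R | (x.1.1 - d <= q.1.1 /\ x.1.2 - d <= q.1.2 /\ x.2 - d <= q.2) /\
    (x.1.1 + d <= q.1.1 \/ x.1.2 + d <= q.1.2 \/ x.2 + d <= q.2)] =
    ([set q | x.1.1 - d <= q.1.1] `&` ([set q | x.1.2 - d <= q.1.2] `&` [set q | x.2 - d <= q.2]))
    `&` ([set q | x.1.1 + d <= q.1.1] `|` ([set q | x.1.2 + d <= q.1.2] `|` [set q | x.2 + d <= q.2])).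
    by apply/seteqP; split => q /=.
  apply: closedI; [apply: closedI; [|apply: closedI]|apply: closedU; [|apply: closedU]];
    apply: closed_pre_ge; (exact: p11_cont || exact: p12_cont || exact: p2_cont).
move=> q [[h1 [h2 [h3 _]]] [[g1 [g2 g3]] _]]; lra.
Qed.

Lemma Db_sub x d : Db x d `<=` X.
Proof. by move=> q []. Qed.

Lemma x_hit x d : X x -> 0 < d -> dn x `&` Ob x d !=set0.
Proof. by move=> Xx d0; exists x; split; [apply: dn_self| split => //=; lra]. Qed.

Lemma x_miss x d : 0 < d -> dn x `&` Db x d = set0.
Proof.
move=> d0; apply/seteqP; split => // q [[Xq [l1 [l2 l3]]] [_ [_ h]]]; lra.
Qed.

Lemma fell_back x d y : 0 < d -> X y -> dn y `&` Ob x d !=set0 ->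
  dn y `&` Db x d = set0 -> near3 d x y.
Proof.
move=> d0 Xy [q [[Xq [l1 [l2 l3]]] [_ [h1 [h2 h3]]]]] hm.
have g1 : x.1.1 - d < y.1.1 by lra.
have g2 : x.1.2 - d < y.1.2 by lra.
have g3 : x.2 - d < y.2 by lra.
have ny : ~ Db x d y.
  move=> hy; suff : (dn y `&` Db x d) y by rewrite hm.
  by split => //; apply: dn_self.
rewrite /near3; split; [split => //|split; [split=>//|split=>//]];
  rewrite ltNge; apply/negP => hc; apply: ny; split => //; split; try lra;
  tauto.
Qed.

Lemma openin_sub U : open_in X U -> U `<=` X.
Proof. by move=> [V [_ ->]] q []. Qed.

Lemma fell_img U : open_in X U -> relative_open (Cdown X le) (fell_open X) (dn @` U).
Proof.
move=> oU.
pose W := [set A | CX X A /\ exists x d, U x /\ X x /\ 0 < d /\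
  (forall y, X y -> near3 d x y -> U y) /\ hit X (Ob x d) A /\ miss X (Db x d) A].
exists W; split.
  split; first by move=> A [].
  move=> A [CA [x [d [Ux [Xx [d0 [HU [hA mA]]]]]]]].
  exists 2%N, (fun i => if i == 0%N then hit X (Ob x d) else miss X (Db x d)).
  split.
    move=> i; case: i => [|[|i]] //= _; split => //.
    - by left; exists (Ob x d); split => //; exact: Ob_open.
    - by right; exists (Db x d); split; [exact: Db_sub | split => //; exact: Db_compact].
  move=> B CB HB; split => //; exists x, d; do 5 (split => //).
    exact: (HB 0%N).
  exact: (HB 1%N).
apply/seteqP; split.
  move=> A [x Ux <-]; have Xx : X x by apply: (openin_sub _ oU).
  split; first by exists x.
  have [d d0 Hd] := @openin_close R X U x oU Ux.
  split; first exact: CX_dn.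
  exists x, d; do 5 (split => //).
    by split; [apply: CX_dn | apply: x_hit].
  by split; [apply: CX_dn | apply: x_miss].
move=> A [[y [Xy ->]] [_ [x [d [Ux [Xx [d0 [HU [[_ hA] [_ mA]]]]]]]]]].
by exists y => //; apply: HU => //; apply: fell_back.
Qed.

Lemma embeds : top_order_embeds X le.
Proof.
split; first by move=> x _; apply: CX_dn.
split; first by move=> x y Xx Xy; apply: le_iff.
split; first by move=> x Xx; exists x.
split; first by move=> s [x [Xx ->]]; exists x.
split; first by move=> x y Xx Xy; apply: dn_inj.
split; first by move=> x Xx; apply: fell_cont.
exact: fell_img.
Qed.

End C.


Section D.
Variable R : realType.
Implicit Types p q x y : pt R.
Local Notation X := (@Xex R).
Local Notation le := (@coord_le R).
Local Notation dn := (downset (@Xex R) (@coord_le R)).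

Lemma closed_le2 (T : topologicalType) (f g : T -> R) :
  continuous f -> continuous g -> closed [set x | f x <= g x].
Proof.
move=> cf cg.
have -> : [set x | f x <= g x] = [set x | f x - g x <= 0].
  by apply/seteqP; split => x /=; rewrite subr_le0.
by apply: closed_pre; apply: sub_cont.
Qed.

Lemma loc_compact : locally_compact_in X.
Proof.
move=> x Xx.
pose K := X `&` [set q : pt R | ((x.1.1 - 1 <= q.1.1 /\ q.1.1 <= x.1.1 + 1) /\
   (x.1.2 - 1 <= q.1.2 /\ q.1.2 <= x.1.2 + 1)) /\ (x.2 - 1 <= q.2 /\ q.2 <= x.2 + 1)].
exists K; split; first by move=> q [].
split.
  apply: (@box_compact R K (x.1.1 - 1) (x.1.1 + 1) (x.1.2 - 1) (x.1.2 + 1) (x.2 - 1) (x.2 + 1)).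
    apply: closedI; first exact: Xclosed.
    have -> : [set q : pt R | ((x.1.1 - 1 <= q.1.1 /\ q.1.1 <= x.1.1 + 1) /\
      (x.1.2 - 1 <= q.1.2 /\ q.1.2 <= x.1.2 + 1)) /\ (x.2 - 1 <= q.2 /\ q.2 <= x.2 + 1)] =
      (([set q | x.1.1 - 1 <= q.1.1] `&` [set q | q.1.1 <= x.1.1 + 1]) `&`
       ([set q | x.1.2 - 1 <= q.1.2] `&` [set q | q.1.2 <= x.1.2 + 1])) `&`
      ([set q | x.2 - 1 <= q.2] `&` [set q | q.2 <= x.2 + 1]).
      by apply/seteqP; split => q /=.
    by apply: closedI; [apply: closedI|]; apply: closedI;
      (apply: closed_pre_ge || apply: closed_pre);
      (exact: p11_cont || exact: p12_cont || exact: p2_cont).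
  by move=> q [_ [[h1 h2] h3]].
exists (X `&` [set q | near3 1 x q]); split; first exact: openin_box.
split; first by split => //; apply: near3_refl.
move=> q [Xq [[c1 c2] [[c3 c4] [c5 c6]]]]; split => //=; lra.
Qed.

Lemma haus : hausdorff_in X.
Proof.
move=> p q Xp Xq npq.
pose s := `|p.1.1 - q.1.1| + `|p.1.2 - q.1.2| + `|p.2 - q.2|.
have n1 := normr_ge0 (p.1.1 - q.1.1).
have n2 := normr_ge0 (p.1.2 - q.1.2).
have n3 := normr_ge0 (p.2 - q.2).
have s0 : 0 < s.
  rewrite ltNge; apply/negP => hs; apply: npq.
  have e1 : `|p.1.1 - q.1.1| = 0 by rewrite /s in hs; lra.
  have e2 : `|p.1.2 - q.1.2| = 0 by rewrite /s in hs; lra.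
  have e3 : `|p.2 - q.2| = 0 by rewrite /s in hs; lra.
  move/normr0_eq0/eqP: e1; rewrite subr_eq0 => /eqP e1.
  move/normr0_eq0/eqP: e2; rewrite subr_eq0 => /eqP e2.
  move/normr0_eq0/eqP: e3; rewrite subr_eq0 => /eqP e3.
  exact: pt_eq.
pose d := s / 6.
exists (X `&` [set r | near3 d p r]), (X `&` [set r | near3 d q r]).
split; first exact: openin_box.
split; first exact: openin_box.
split; first by split => //; apply: near3_refl; rewrite /d; lra.
split; first by split => //; apply: near3_refl; rewrite /d; lra.
apply/seteqP; split => // r [[_ [[a1 a2] [[a3 a4] [a5 a6]]]] [_ [[b1 b2] [[b3 b4] [b5 b6]]]]].
have h1 : `|p.1.1 - q.1.1| < 2 * d by rewrite ltr_norml; apply/andP; split; lra.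
have h2 : `|p.1.2 - q.1.2| < 2 * d by rewrite ltr_norml; apply/andP; split; lra.
have h3 : `|p.2 - q.2| < 2 * d by rewrite ltr_norml; apply/andP; split; lra.
rewrite /d /s in h1 h2 h3; clear -h1 h2 h3; lra.
Qed.

Definition gam (z y : pt R) (t : R) : pt R :=
  ((z.1.1 + t * (y.1.1 - z.1.1), z.1.2 + t * (y.1.2 - z.1.2)), z.2 + t * (y.2 - z.2)).

Lemma gam_cont z y : continuous (gam z y).
Proof.
apply: pair_cont; first apply: pair_cont;
  (apply: add_cont; [exact: cst_cont| apply: mul_cont; [exact: id_cont| exact: cst_cont]]).
Qed.

Lemma gam_in x y z t : X y -> X z -> le x z -> le z y -> 0 <= t -> t <= 1 ->
  X (gam z y t) /\ le x (gam z y t) /\ le (gam z y t) y.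
Proof.
move=> [y1 [y2 [y3 y4]]] [z1 [z2 [z3 z4]]] [a1 [a2 a3]] [b1 [b2 b3]] t0 t1.
rewrite /gam /Xex /coord_le /=.
have p1 : 0 <= t * (y.1.1 - z.1.1) by apply: mulr_ge0; lra.
have p2 : 0 <= t * (y.1.2 - z.1.2) by apply: mulr_ge0; lra.
have p3 : 0 <= t * (y.2 - z.2) by apply: mulr_ge0; lra.
have q1 : 0 <= (1 - t) * (y.1.1 - z.1.1) by apply: mulr_ge0; lra.
have q2 : 0 <= (1 - t) * (y.1.2 - z.1.2) by apply: mulr_ge0; lra.
have q3 : 0 <= (1 - t) * (y.2 - z.2) by apply: mulr_ge0; lra.
have hh : 0 <= (t * (1 - t)) * ((y.1.1 - z.1.1) * (y.1.2 - z.1.2)).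
  by apply: mulr_ge0; apply: mulr_ge0; lra.
have hz : (1 - t) * (z.1.1 * z.1.2 + z.2 - 1) <= 0 by apply: mulr_ge0_le0; lra.
have hy : t * (y.1.1 * y.1.2 + y.2 - 1) <= 0 by apply: mulr_ge0_le0; lra.
have e : (z.1.1 + t * (y.1.1 - z.1.1)) * (z.1.2 + t * (y.1.2 - z.1.2)) +
   (z.2 + t * (y.2 - z.2)) - 1 =
   (1 - t) * (z.1.1 * z.1.2 + z.2 - 1) + t * (y.1.1 * y.1.2 + y.2 - 1)
   - (t * (1 - t)) * ((y.1.1 - z.1.1) * (y.1.2 - z.1.2)) by ring.
split; first (split; [lra|split; [lra|split; [lra|rewrite e; lra]]]).
split; lra.
Qed.

Lemma ord_conn : order_connected X le.
Proof.
move=> x y Xx Xy lxy.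
pose S := upset X le x `&` downset X le y.
have -> : upset X le x `&` downset X le y = \bigcup_(z in S) (gam z y @` `[0, 1]).
  apply/seteqP; split.
    move=> z Sz; exists z => //; exists 0; first by rewrite /= in_itv /= lexx ler01.
    by apply: pt_eq; rewrite /gam /= mul0r addr0.
  move=> w [z [[Xz lxz] [_ lzy]] [t]]; rewrite /= in_itv /= => /andP [t0 t1] <-.
  have [h1 [h2 h3]] := gam_in x y z t Xy Xz lxz lzy t0 t1.
  by split; split.
apply: bigcup_connected.
  exists y => z _; exists 1; first by rewrite /= in_itv /= lexx ler01.
  by apply: pt_eq; rewrite /gam /= mul1r addrC subrK.
move=> z _; apply: connected_continuous_connected; first exact: segment_connected.
by apply: continuous_subspaceT; apply: gam_cont.
Qed.

Definition mt (p : pt R * pt R) : pt R :=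
  ((Num.min p.1.1.1 p.2.1.1, Num.min p.1.1.2 p.2.1.2),
   Num.min (Num.min p.1.2 p.2.2) (1 - Num.min p.1.1.1 p.2.1.1 * Num.min p.1.1.2 p.2.1.2)).

Lemma mt_cont : continuous mt.
Proof.
apply: pair_cont; first apply: pair_cont.
- apply: min_cont; [exact: c111|exact: c211].
- apply: min_cont; [exact: c112|exact: c212].
apply: min_cont; first by apply: min_cont; [exact: c12|exact: c22].
apply: add_cont; first exact: cst_cont.
apply: opp_cont; apply: mul_cont; apply: min_cont.
exact: c111. exact: c211. exact: c112. exact: c212.
Qed.

Lemma mt_inf a b : X a -> X b -> is_inf_in X le a b (mt (a, b)).
Proof.
move=> [a1 [a2 [a3 a4]]] [b1 [b2 [b3 b4]]].
rewrite /is_inf_in /mt /Xex /coord_le /=.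
set u := Num.min a.1.1 b.1.1; set v := Num.min a.1.2 b.1.2.
set w := Num.min (Num.min a.2 b.2) (1 - u * v).
have u1 : u <= a.1.1 by rewrite /u ge_min lexx.
have u2 : u <= b.1.1 by rewrite /u ge_min lexx orbT.
have v1 : v <= a.1.2 by rewrite /v ge_min lexx.
have v2 : v <= b.1.2 by rewrite /v ge_min lexx orbT.
have w1 : w <= a.2 by rewrite /w !ge_min lexx.
have w2 : w <= b.2 by rewrite /w !ge_min lexx !orbT.
have w3 : w <= 1 - u * v by rewrite /w !ge_min lexx !orbT.
split; first by split; [lra|split; [lra|split; lra]].
split; first by split; [lra|split; lra].
split; first by split; [lra|split; lra].
move=> c [c1 [c2 [c3 c4]]] [d1 [d2 d3]] [e1 [e2 e3]].
have cu : c.1.1 <= u by rewrite /u le_min; apply/andP.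
have cv : c.1.2 <= v by rewrite /v le_min; apply/andP.
have uv : u * v <= c.1.1 * c.1.2 by nra.
have cw : c.2 <= w by rewrite /w !le_min; apply/andP; split; [apply/andP; split|]; lra.
by split; [|split].
Qed.

Lemma meet_sl : top_meet_semilattice X le.
Proof.
split.
  split.
    split; first by move=> x _; rewrite /coord_le; lra.
    split; first by move=> x y _ _ [a1 [a2 a3]] [b1 [b2 b3]]; apply: pt_eq; lra.
    by move=> x y z _ _ _ [a1 [a2 a3]] [b1 [b2 b3]]; rewrite /coord_le; lra.
  exists [set pq : pt R * pt R | pq.1.1.1 <= pq.2.1.1 /\ pq.1.1.2 <= pq.2.1.2 /\ pq.1.2 <= pq.2.2].
  split.
    have -> : [set pq : pt R * pt R | pq.1.1.1 <= pq.2.1.1 /\ pq.1.1.2 <= pq.2.1.2 /\ pq.1.2 <= pq.2.2]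
      = [set pq | pq.1.1.1 <= pq.2.1.1] `&` ([set pq | pq.1.1.2 <= pq.2.1.2] `&` [set pq | pq.1.2 <= pq.2.2]).
      by apply/seteqP; split => pq /=.
    apply: closedI; [|apply: closedI]; apply: closed_le2.
    exact: c111. exact: c211. exact: c112. exact: c212. exact: c12. exact: c22.
  by apply/seteqP; split => pq /=; rewrite /coord_le; tauto.
exists (fun a b => mt (a, b)); split; first by move=> a b; apply: mt_inf.
exact: continuous_subspaceT mt_cont.
Qed.

End D.


Section E.
Variable R : realType.
Implicit Types p q x y : pt R.
Local Notation X := (@Xex R).
Local Notation le := (@coord_le R).
Local Notation dn := (downset (@Xex R) (@coord_le R)).

Lemma euclid_distC (a b : pt R) : euclid_dist a b = euclid_dist b a.
Proof.
rewrite /euclid_dist; congr Num.sqrt.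
by rewrite -(opprB a.1.1) -(opprB a.1.2) -(opprB a.2) !sqrrN.
Qed.

Lemma sq_lt1 (x : R) : x * x < 1 -> -1 < x < 1.
Proof. move=> h; apply/andP; split; nra. Qed.

Lemma dist_lt1 (a b : pt R) : euclid_dist a b < 1 ->
  (-1 < a.1.1 - b.1.1 < 1) /\ (-1 < a.1.2 - b.1.2 < 1) /\ (-1 < a.2 - b.2 < 1).
Proof.
rewrite /euclid_dist -[X in _ < X]sqrtr1 ltr_sqrt ?ltr01 // => h.
have s1 := sqr_ge0 (a.1.1 - b.1.1).
have s2 := sqr_ge0 (a.1.2 - b.1.2).
have s3 := sqr_ge0 (a.2 - b.2).
have h1 : (a.1.1 - b.1.1) ^+ 2 < 1 by lra.
have h2 : (a.1.2 - b.1.2) ^+ 2 < 1 by lra.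
have h3 : (a.2 - b.2) ^+ 2 < 1 by lra.
rewrite !expr2 in h1 h2 h3.
by split; [exact: sq_lt1 h1|split; [exact: sq_lt1 h2|exact: sq_lt1 h3]].
Qed.

Lemma far_u y z : X y -> X z -> z.1.1 < y.1.1 ->
  exists a, dn y a /\ forall b, dn z b -> 1 <= euclid_dist a b.
Proof.
move=> [y1 [y2 [y3 y4]]] [z1 [z2 [z3 z4]]] hu.
have [t [t1 [t2 tD]]] : exists t, t <= -1 /\ t <= y.1.2 /\
    3 - z.1.1 - y.2 <= (y.1.1 - z.1.1) * (- t).
  pose D := y.1.1 - z.1.1.
  have D0 : 0 < D by rewrite /D subr_gt0.
  pose K := (3 - z.1.1 - y.2) / D.
  have hK : D * K = 3 - z.1.1 - y.2 by rewrite /K; field; apply: lt0r_neq0.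
  have K0 : 0 <= K by rewrite /K divr_ge0 //; lra.
  pose m := Num.min y.1.2 (-1).
  have m1 : m <= y.1.2 by rewrite /m ge_min lexx.
  have m2 : m <= -1 by rewrite /m ge_min lexx orbT.
  have hm : 0 <= D * (- m) by apply: mulr_ge0; lra.
  exists (m - K); split; first lra; split; first lra.
  have -> : (y.1.1 - z.1.1) * - (m - K) = D * (- m) + D * K by rewrite /D; ring.
  lra.
exists ((y.1.1, t), y.2 - y.1.1 * t); split.
  have ut : 0 <= y.1.1 * t by apply: mulr_le0; lra.
  split; last by rewrite /coord_le /=; lra.
  rewrite /Xex /=; split; first lra; split; first lra.
  split; first lra.
  have -> : y.1.1 * t + (y.2 - y.1.1 * t) - 1 = y.2 - 1 by ring.
  lra.
move=> b [[b1 [b2 [b3 b4]]] [l1 [l2 l3]]].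
rewrite leNgt; apply/negP => /dist_lt1 /= [_ [/andP [d1 d2] /andP [d3 d4]]].
have h1 : 0 <= (z.1.1 - b.1.1) * (- b.1.2) by apply: mulr_ge0; lra.
have h2 : 0 <= (- z.1.1) * (t + 1 - b.1.2) by apply: mulr_ge0; lra.
nra.
Qed.

Lemma far_v y z : X y -> X z -> z.1.2 < y.1.2 ->
  exists a, dn y a /\ forall b, dn z b -> 1 <= euclid_dist a b.
Proof.
move=> [y1 [y2 [y3 y4]]] [z1 [z2 [z3 z4]]] hu.
have [t [t1 [t2 tD]]] : exists t, t <= -1 /\ t <= y.1.1 /\
    3 - z.1.2 - y.2 <= (y.1.2 - z.1.2) * (- t).
  pose D := y.1.2 - z.1.2.
  have D0 : 0 < D by rewrite /D subr_gt0.
  pose K := (3 - z.1.2 - y.2) / D.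
  have hK : D * K = 3 - z.1.2 - y.2 by rewrite /K; field; apply: lt0r_neq0.
  have K0 : 0 <= K by rewrite /K divr_ge0 //; lra.
  pose m := Num.min y.1.1 (-1).
  have m1 : m <= y.1.1 by rewrite /m ge_min lexx.
  have m2 : m <= -1 by rewrite /m ge_min lexx orbT.
  have hm : 0 <= D * (- m) by apply: mulr_ge0; lra.
  exists (m - K); split; first lra; split; first lra.
  have -> : (y.1.2 - z.1.2) * - (m - K) = D * (- m) + D * K by rewrite /D; ring.
  lra.
exists ((t, y.1.2), y.2 - y.1.2 * t); split.
  have ut : 0 <= y.1.2 * t by apply: mulr_le0; lra.
  split; last by rewrite /coord_le /=; lra.
  rewrite /Xex /=; split; first lra; split; first lra.
  split; first lra.
  have -> : t * y.1.2 + (y.2 - y.1.2 * t) - 1 = y.2 - 1 by ring.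
  lra.
move=> b [[b1 [b2 [b3 b4]]] [l1 [l2 l3]]].
rewrite leNgt; apply/negP => /dist_lt1 /= [/andP [d1 d2] [_ /andP [d3 d4]]].
have h1 : 0 <= (z.1.2 - b.1.2) * (- b.1.1) by apply: mulr_ge0; lra.
have h2 : 0 <= (- z.1.2) * (t + 1 - b.1.1) by apply: mulr_ge0; lra.
nra.
Qed.

Lemma H_left (A B : set (pt R)) a : A a -> (forall b, B b -> 1 <= euclid_dist a b) ->
  (1%:E <= hausdorff_dist A B)%E.
Proof.
move=> Aa H; rewrite /hausdorff_dist le_max; apply/orP; left.
apply: le_trans (ereal_sup_ubound _); last by exists a.
by apply: le_ereal_inf_tmp => _ [b Bb <-]; rewrite lee_fin; apply: H.
Qed.

Lemma H_right (A B : set (pt R)) b : B b -> (forall a, A a -> 1 <= euclid_dist a b) ->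
  (1%:E <= hausdorff_dist A B)%E.
Proof.
move=> Bb H; rewrite /hausdorff_dist le_max; apply/orP; right.
apply: le_trans (ereal_sup_ubound _); last by exists b.
by apply: le_ereal_inf_tmp => _ [a Aa <-]; rewrite lee_fin; apply: H.
Qed.

Lemma H_ge1 y z : X y -> X z -> y.1 <> z.1 -> (1%:E <= hausdorff_dist (dn z) (dn y))%E.
Proof.
move=> Xy Xz ne.
have [e1|n1] := eqVneq y.1.1 z.1.1.
  have [e2|n2] := eqVneq y.1.2 z.1.2.
    by exfalso; apply: ne; rewrite [y.1]surjective_pairing [z.1]surjective_pairing e1 e2.
  case: (ltgtP y.1.2 z.1.2) n2 => // h _.
    have [a [da Ha]] := far_v z y Xz Xy h.
    by apply: (H_left _ _ _ da).
  have [a [da Ha]] := far_v y z Xy Xz h.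
  by apply: (H_right _ _ _ da) => b db; rewrite euclid_distC; apply: Ha.
case: (ltgtP y.1.1 z.1.1) n1 => // h _.
  have [a [da Ha]] := far_u z y Xz Xy h.
  by apply: (H_left _ _ _ da).
have [a [da Ha]] := far_u y z Xy Xz h.
by apply: (H_right _ _ _ da) => b db; rewrite euclid_distC; apply: Ha.
Qed.

Lemma move_u x d : X x -> 0 < d -> exists y, X y /\ near3 d x y /\ y.1.1 <> x.1.1.
Proof.
move=> [x1 [x2 [x3 x4]]] d0.
case: (ltgtP x.1.1 0) => hx; last 1 first.
- pose e := Num.min (d / 2) (1 / (1 - x.1.2)).
  have e1 : e <= d / 2 by rewrite /e ge_min lexx.
  have e2 : e <= 1 / (1 - x.1.2) by rewrite /e ge_min lexx orbT.
  have q0 : 0 < 1 - x.1.2 by lra.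
  have e0 : 0 < e by rewrite /e lt_min divr_gt0 //= divr_gt0 //; lra.
  have e3 : e * (1 - x.1.2) <= 1.
    by rewrite -ler_pdivlMr // mul1r -[X in _ <= X]mul1r.
  exists ((- e, x.1.2), x.2); split.
    rewrite /Xex /=; split; first lra; split; first lra; split; first lra; nra.
  by split; [rewrite /near3 /=; lra| move=> /= h; lra].
- pose e := Num.min (d / 2) (- x.1.1).
  have e1 : e <= d / 2 by rewrite /e ge_min lexx.
  have e2 : e <= - x.1.1 by rewrite /e ge_min lexx orbT.
  have e0 : 0 < e by rewrite /e lt_min divr_gt0 //= oppr_gt0.
  exists ((x.1.1 + e, x.1.2), x.2); split.
    have h : e * x.1.2 <= 0 by apply: mulr_ge0_le0; lra.
    rewrite /Xex /=; split; first lra; split; first lra; split; first lra; nra.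
  by split; [rewrite /near3 /=; lra| move=> /= h; lra].
- lra.
Qed.

Lemma haus_discont x : X x -> ~ cont_at_into X (hausdorff_open (Cdown X le)) dn x.
Proof.
move=> Xx cont.
pose U := [set B | Cdown X le B /\ exists z, X z /\ B = dn z /\ z.1 = x.1].
have oU : hausdorff_open (Cdown X le) U.
  split; first by move=> B [].
  move=> A [_ [z [Xz [-> ez]]]]; exists 1; split => // B [y [Xy ->]] hd.
  split; first by exists y.
  exists y; split => //; split => //; rewrite -ez.
  case: (pselect (y.1 = z.1)) => // ne; exfalso.
  have := H_ge1 y z Xy Xz ne => h.
  by have := le_lt_trans h hd; rewrite ltxx.
have Ux : U (dn x) by split; exists x.
have [V [oV [Vx HV]]] := cont U oU Ux.
have [d d0 Hd] := @openin_close R X V x oV Vx.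
have [y [Xy [cy ny]]] := move_u x d Xx d0.
have [_ [z [Xz [e ez]]]] := HV y (Hd y Xy cy).
have yz : y = z by apply: dn_inj.
by apply: ny; rewrite yz ez.
Qed.

End E.


Section F.
Variable R : realType.
Implicit Types p q x y : pt R.
Local Notation X := (@Xex R).
Local Notation le := (@coord_le R).
Local Notation dn := (downset (@Xex R) (@coord_le R)).

Lemma viet_cont_o : cont_at_into X (relative_open (Cdown X le) (vietoris_open X)) dn ((0, 0, 0) : pt R).
Proof.
apply: cont_gen; first by rewrite /Xex /=; lra.
move=> W [[V [oV ->]] | [E [EX [cE ->]]]] [_ h].
  have [d d0 Hd] := hit_near R _ V oV h.
  by exists d => // y Xy cy; split; [apply: CX_dn | apply: Hd].
exists 1 => // y Xy cy; split; first exact: CX_dn.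
apply/seteqP; split => // q [[Xq _] Eq].
suff : (dn (0, 0, 0) `&` E) q by rewrite h.
split => //; split => //; case: Xq => [q1 [q2 [q3 _]]]; rewrite /coord_le /=; lra.
Qed.

Lemma viet_discont_gen x E : X x -> E `<=` X -> closed_in X E -> dn x `&` E = set0 ->
  (forall d, 0 < d -> exists y, X y /\ near3 d x y /\ dn y `&` E !=set0) ->
  ~ cont_at_into X (relative_open (Cdown X le) (vietoris_open X)) dn x.
Proof.
move=> Xx EX cE hx H cont.
pose U := Cdown X le `&` miss X E.
have oU : relative_open (Cdown X le) (vietoris_open X) U.
  exists (miss X E); split => //.
  split; first by move=> A [].
  move=> A hA; exists 1%N, (fun _ => miss X E); split.
    by move=> i _; split => //; right; exists E.
  by move=> B CB /(_ 0%N isT).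
have Ux : U (dn x) by split; [exists x | split; [apply: CX_dn|]].
have [V [oV [Vx HV]]] := cont U oU Ux.
have [d d0 Hd] := @openin_close R X V x oV Vx.
have [y [Xy [cy [q hq]]]] := H d d0.
have [_ [_ hm]] := HV y (Hd y Xy cy).
by move: hq; rewrite hm.
Qed.

Lemma discA x : X x -> x.1.1 < 0 ->
  ~ cont_at_into X (relative_open (Cdown X le) (vietoris_open X)) dn x.
Proof.
move=> Xx hx.
apply: (@viet_discont_gen x (X `&` [set z | 1 <= (z.1.1 - x.1.1) * (- z.1.2)])) => //.
- exists [set z | 1 <= (z.1.1 - x.1.1) * (- z.1.2)]; split => //.
  apply: closed_pre_ge; apply: mul_cont;
    [apply: sub_cont; [exact: p11_cont|exact: cst_cont]|apply: opp_cont; exact: p12_cont].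
- apply/seteqP; split => // q [[[q1 [q2 [q3 q4]]] [l1 _]] [_ h]].
  have : (q.1.1 - x.1.1) * (- q.1.2) <= 0 by apply: mulr_le0_ge0; lra.
  move=> /= h'; move: h => /=; lra.
move=> d d0.
case: Xx => [x1 [x2 [x3 x4]]].
pose e := Num.min (d / 2) (- x.1.1).
have e1 : e <= d / 2 by rewrite /e ge_min lexx.
have e2 : e <= - x.1.1 by rewrite /e ge_min lexx orbT.
have e0 : 0 < e by rewrite /e lt_min divr_gt0 //= oppr_gt0.
have ei : e * e^-1 = 1 by rewrite mulfV // lt0r_neq0.
have ei0 : 0 < e^-1 by rewrite invr_gt0.
have h : e * x.1.2 <= 0 by apply: mulr_ge0_le0; lra.
exists ((x.1.1 + e, x.1.2), x.2); split.
  rewrite /Xex /=; split; first lra; split; first lra; split; first lra; nra.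
split; first by rewrite /near3 /=; lra.
have ht : 0 <= (x.1.1 + e) * (x.1.2 - e^-1) by apply: mulr_le0; lra.
exists ((x.1.1 + e, x.1.2 - e^-1), x.2 - (x.1.1 + e) * (x.1.2 - e^-1)).
have Xz : X ((x.1.1 + e, x.1.2 - e^-1), x.2 - (x.1.1 + e) * (x.1.2 - e^-1)).
  rewrite /Xex /=; split; first lra; split; first lra; split; first lra.
  have -> : (x.1.1 + e) * (x.1.2 - e^-1) + (x.2 - (x.1.1 + e) * (x.1.2 - e^-1)) - 1
    = x.2 - 1 by ring.
  lra.
split; first by split => //; rewrite /coord_le /=; lra.
split => //=.
have -> : (x.1.1 + e - x.1.1) * - (x.1.2 - e^-1) = e * e^-1 - e * x.1.2 by ring.
rewrite ei; lra.
Qed.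

Lemma discB x : X x -> x.1.2 < 0 ->
  ~ cont_at_into X (relative_open (Cdown X le) (vietoris_open X)) dn x.
Proof.
move=> Xx hx.
apply: (@viet_discont_gen x (X `&` [set z | 1 <= (z.1.2 - x.1.2) * (- z.1.1)])) => //.
- exists [set z | 1 <= (z.1.2 - x.1.2) * (- z.1.1)]; split => //.
  apply: closed_pre_ge; apply: mul_cont;
    [apply: sub_cont; [exact: p12_cont|exact: cst_cont]|apply: opp_cont; exact: p11_cont].
- apply/seteqP; split => // q [[[q1 [q2 [q3 q4]]] [_ [l2 _]]] [_ h]].
  have : (q.1.2 - x.1.2) * (- q.1.1) <= 0 by apply: mulr_le0_ge0; lra.
  move=> /= h'; move: h => /=; lra.
move=> d d0.
case: Xx => [x1 [x2 [x3 x4]]].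
pose e := Num.min (d / 2) (- x.1.2).
have e1 : e <= d / 2 by rewrite /e ge_min lexx.
have e2 : e <= - x.1.2 by rewrite /e ge_min lexx orbT.
have e0 : 0 < e by rewrite /e lt_min divr_gt0 //= oppr_gt0.
have ei : e * e^-1 = 1 by rewrite mulfV // lt0r_neq0.
have ei0 : 0 < e^-1 by rewrite invr_gt0.
have h : e * x.1.1 <= 0 by apply: mulr_ge0_le0; lra.
exists ((x.1.1, x.1.2 + e), x.2); split.
  rewrite /Xex /=; split; first lra; split; first lra; split; first lra; nra.
split; first by rewrite /near3 /=; lra.
have ht : 0 <= (x.1.1 - e^-1) * (x.1.2 + e) by apply: mulr_le0; lra.
exists ((x.1.1 - e^-1, x.1.2 + e), x.2 - (x.1.1 - e^-1) * (x.1.2 + e)).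
have Xz : X ((x.1.1 - e^-1, x.1.2 + e), x.2 - (x.1.1 - e^-1) * (x.1.2 + e)).
  rewrite /Xex /=; split; first lra; split; first lra; split; first lra.
  have -> : (x.1.1 - e^-1) * (x.1.2 + e) + (x.2 - (x.1.1 - e^-1) * (x.1.2 + e)) - 1
    = x.2 - 1 by ring.
  lra.
split; first by split => //; rewrite /coord_le /=; lra.
split => //=.
have -> : (x.1.2 + e - x.1.2) * - (x.1.1 - e^-1) = e * e^-1 - e * x.1.1 by ring.
rewrite ei; lra.
Qed.

Lemma discC x : X x -> x.1.1 = 0 -> x.1.2 = 0 -> x.2 < 0 ->
  ~ cont_at_into X (relative_open (Cdown X le) (vietoris_open X)) dn x.
Proof.
move=> Xx hx1 hx2 hx.
apply: (@viet_discont_gen x (X `&` [set z | 1 <= (z.2 - x.2) * (1 - z.1.1)])) => //.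
- exists [set z | 1 <= (z.2 - x.2) * (1 - z.1.1)]; split => //.
  apply: closed_pre_ge; apply: mul_cont;
    [apply: sub_cont; [exact: p2_cont|exact: cst_cont]|apply: sub_cont; [exact: cst_cont|exact: p11_cont]].
- apply/seteqP; split => // q [[[q1 [q2 [q3 q4]]] [_ [_ l3]]] [_ h]].
  have : (q.2 - x.2) * (1 - q.1.1) <= 0 by apply: mulr_le0_ge0; lra.
  move=> /= h'; move: h => /=; lra.
move=> d d0.
pose e := Num.min (d / 2) (- x.2).
have e1 : e <= d / 2 by rewrite /e ge_min lexx.
have e2 : e <= - x.2 by rewrite /e ge_min lexx orbT.
have e0 : 0 < e by rewrite /e lt_min divr_gt0 //= oppr_gt0.
have ei : e * e^-1 = 1 by rewrite mulfV // lt0r_neq0.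
have ei0 : 0 < e^-1 by rewrite invr_gt0.
exists ((x.1.1, x.1.2), x.2 + e); split.
  rewrite /Xex /= hx1 hx2; split; first lra; split; first lra; split; first lra.
  rewrite mul0r; lra.
split; first by rewrite /near3 /=; lra.
exists ((- e^-1, 0), x.2 + e).
have Xz : X ((- e^-1, 0), x.2 + e).
  by rewrite /Xex /=; split; first lra; split; first lra; split; first lra; rewrite mulr0; lra.
split; first by split => //; rewrite /coord_le /=; lra.
split => //=.
have -> : (x.2 + e - x.2) * (1 - - e^-1) = e + e * e^-1 by ring.
rewrite ei; lra.
Qed.

Lemma viet_discont x : X x -> x <> ((0, 0, 0) : pt R) ->
  ~ cont_at_into X (relative_open (Cdown X le) (vietoris_open X)) dn x.
Proof.
move=> Xx nx; have [x1 [x2 [x3 x4]]] := Xx.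
case: (ltgtP x.1.1 0) => h1; [exact: discA | by clear -x1 h1; lra |].
case: (ltgtP x.1.2 0) => h2; [exact: discB | by clear -x2 h2; lra |].
case: (ltgtP x.2 0) => h3; [exact: discC | by clear -x3 h3; lra |].
by exfalso; apply: nx; apply: pt_eq.
Qed.

End F.


Theorem mainTheorem11 (R : realType) :
  let X := @Xex R in
  let le := @coord_le R in
  let o : pt R := (0, 0, 0) in
  (locally_compact_in X /\ order_connected X le /\ hausdorff_in X /\
   top_meet_semilattice X le) /\
  top_order_embeds X le /\
  (forall x, X x ->
     ~ cont_at_into X (hausdorff_open (Cdown X le)) (downset X le) x) /\
  ((forall x, X x -> x <> o ->
     ~ cont_at_into X (relative_open (Cdown X le) (vietoris_open X)) (downset X le) x) /\
   cont_at_into X (relative_open (Cdown X le) (vietoris_open X)) (downset X le) o).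
Proof.
cbv zeta.
split; first split; [exact: loc_compact | split; [exact: ord_conn | split; [exact: haus | exact: meet_sl]]|].
split; first exact: embeds.
split; first by move=> x Xx; apply: haus_discont.
split; first by move=> x Xx nx; apply: viet_discont.
exact: viet_cont_o.
Qed.
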